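(* There are exactly $240$ special Sudoku grids over $\mathbb{Z}_5$. Moreover, there is a special Sudoku grid $S_0$ over $\mathbb{Z}_5$ such that every special Sudoku grid over $\mathbb{Z}_5$ is equivalent to $S_0$ up to relabeling and reflection, i.e. it is obtained from $S_0$ or from $s(S_0)$ by a relabeling of symbols.
   Context: Work in $\mathbb{Z}_5^2$ with Lee distance $d_L(\mathbf{u},\mathbf{v})=\sum_i\min\{w_i,5-w_i\}$, $\mathbf{w}=\mathbf{u}-\mathbf{v}$. A $(2,5,3)$ perfect code over $\mathbb{Z}_5$ is a set $\mathcal{C}=\{\mathbf{c}_1,\dots,\mathbf{c}_5\}\subseteq\mathbb{Z}_5^2$ with minimum Lee distance $3$ (so the Lee balls of radius $1$, each of size $5$, around the codewords partition $\mathbb{Z}_5^2$). Its palette grid $\mathcal{I}_\mathcal{C}$ is the $5\times5$ array (rows/columns indexed by $\mathbb{Z}_5$) with entry $i$ at every position in the radius-1 ball around $\mathbf{c}_i$. A perfect Sudoku grid with respect to $\mathcal{C}$ is a Latin square of order $5$ on $\{1,\dots,5\}$ orthogonal to $\mathcal{I}_\mathcal{C}$ (all $25$ ordered pairs of corresponding entries distinct). A special Sudoku grid over $\mathbb{Z}_5$ is a $5\times5$ array that is a perfect Sudoku grid with respect to every $(2,5,3)$ perfect code over $\mathbb{Z}_5$. Relabeling applies a bijection of $\{1,\dots,5\}$ to all entries; the reflection is $(s(A))_{i,j}=A_{i,4-j}$. *)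

(* Defs.v *)
From mathcomp Require Import all_boot all_order all_algebra all_fingroup.
Set Implicit Arguments. Unset Strict Implicit. Unset Printing Implicit Defensive.
Import GRing.Theory.

(* Z_5 is modelled as 'I_5 with its canonical ring structure mod 5 (zmodp). *)
Definition Z5 := 'I_5.
Definition point := (Z5 * Z5)%type.

Definition lee_wt (w : Z5) : nat := minn (val w) (5 - val w).

Definition lee_dist (u v : point) : nat :=
  lee_wt (u.1 - v.1)%R + lee_wt (u.2 - v.2)%R.

(* Symbols {1,...,5} are represented by 'I_5 = {0,...,4} (symbol k+1 <-> k). *)
Definition symbol := 'I_5.

(* A 5x5 array: entry at (row i, column j). *)
Definition grid := {ffun point -> symbol}.

(* A (2,5,3) perfect code {c_1,...,c_5}, given as the indexed family
   c : 'I_5 -> Z_5^2 (codeword c_(i+1) = c i), with minimum Lee distance 3. *)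
Definition perfect_code (c : 'I_5 -> point) : bool :=
  [forall i, forall j, (i != j) ==> (3 <= lee_dist (c i) (c j))] &&
  [exists i, exists j, (i != j) && (lee_dist (c i) (c j) == 3)].

Definition palette (c : 'I_5 -> point) : grid :=
  [ffun p => odflt ord0 [pick i | lee_dist p (c i) <= 1]].

Definition latin (A : grid) : bool :=
  [forall i : Z5, injectiveb (fun j : Z5 => A (i, j))] &&
  [forall j : Z5, injectiveb (fun i : Z5 => A (i, j))].

Definition orthogonal (A B : grid) : bool :=
  injectiveb (fun p : point => (A p, B p)).

Definition perfect_sudoku (c : 'I_5 -> point) (A : grid) : bool :=
  latin A && orthogonal A (palette c).

Definition special (A : grid) : bool :=
  [forall c : {ffun 'I_5 -> point}, perfect_code c ==> perfect_sudoku c A].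

Definition relabel (sigma : {perm symbol}) (A : grid) : grid :=
  [ffun p => sigma (A p)].

Definition reflect_grid (A : grid) : grid :=
  [ffun p : point => A (p.1, rev_ord p.2)].

(* Main.v *)
Require Import Defs.
From mathcomp Require Import all_boot all_order all_algebra all_fingroup.
From Stdlib Require Import FunctionalExtensionality.
Set Implicit Arguments. Unset Strict Implicit. Unset Printing Implicit Defensive.
Import GRing.Theory.

Local Open Scope ring_scope.

Definition Zl : seq 'I_5 := [:: 0; 1; 2; 3; 4].
Lemma memZ x : x \in Zl. Proof. by case: x => [[|[|[|[|[|n]]]]] Hx]. Qed.

Lemma allE (P : pred 'I_5) : all P Zl -> forall x, P x.
Proof. by move=> /allP H x; apply: H; exact: memZ. Qed.

Lemma hasE (P : pred 'I_5) : has P Zl -> exists x, P x.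
Proof. by move=> /hasP [x _ Hx]; exists x. Qed.

Definition c1l : seq point := [:: (0, 0); (1, 2); (2, 4); (3, 1); (4, 3)].
Definition c2l : seq point := [:: (0, 1); (1, 3); (2, 0); (3, 2); (4, 4)].
Definition c1f (i : 'I_5) : point := nth (0, 0) c1l i.
Definition c2f (i : 'I_5) : point := nth (0, 0) c2l i.
Definition pal (c : 'I_5 -> point) (p : point) : symbol :=
  odflt ord0 [pick i | lee_dist p (c i) <= 1]%N.

Definition padd (p q : point) : point := (p.1 + q.1, p.2 + q.2).
Definition delta (d : 'I_5) : point :=
  nth (0, 0) [:: (0, 0); (1, 0); (4, 0); (0, 1); (0, 4)] d.

Lemma dd_small_c : all (fun d : 'I_5 => all (fun d' : 'I_5 =>
  (lee_wt ((delta d').1 - (delta d).1)%R + lee_wt ((delta d').2 - (delta d).2)%R <= 2)%N)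
  Zl) Zl.
Proof. by vm_compute. Qed.

Lemma ball_delta_c : all (fun a : 'I_5 => all (fun b : 'I_5 =>
  ((lee_wt a + lee_wt b <= 1)%N ==> has (fun d => (a, b) == delta d) Zl)) Zl) Zl.
Proof. by vm_compute. Qed.

Lemma delta_inj_c : all (fun d : 'I_5 => all (fun d' : 'I_5 =>
  (delta d == delta d') ==> (d == d')) Zl) Zl.
Proof. by vm_compute. Qed.

Lemma delta_small_c : all (fun d : 'I_5 =>
  (lee_wt (delta d).1 + lee_wt (delta d).2 <= 1)%N) Zl.
Proof. by vm_compute. Qed.

Lemma sub_c : all (fun a : 'I_5 => all (fun x : 'I_5 => all (fun b : 'I_5 => all (fun y : 'I_5 =>
  (a + x == b + y) ==> (a - b == y - x)) Zl) Zl) Zl) Zl.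
Proof. by vm_compute. Qed.

Lemma sub_lem (a x b y : 'I_5) : a + x = b + y -> a - b = y - x.
Proof.
move=> h; apply/eqP.
have := allE (allE (allE (allE sub_c a) x) b) y.
by rewrite h eqxx.
Qed.

Section Codes.
Variable c : 'I_5 -> point.
Hypothesis hc : perfect_code c.

Definition Fc (kd : 'I_5 * 'I_5) : 'I_5 * 'I_5 := padd (c kd.1) (delta kd.2).

Lemma Fc_inj : injective Fc.
Proof.
move=> [k d] [k' d'] e.
have e1 := congr1 fst e; have e2 := congr1 snd e; rewrite /Fc /padd /= in e1 e2.
have hk : k = k'.
  apply/eqP; apply: contraT => hne.
  move: hc => /andP [/forallP /(_ k) /forallP /(_ k') /implyP /(_ hne) H _].
  move: H; rewrite /lee_dist (sub_lem e1) (sub_lem e2) => H.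
  have := leq_trans H (allE (allE dd_small_c d) d').
  by [].
subst k'.
have h1 := addrI _ e1; have h2 := addrI _ e2.
have : delta d = delta d'.
  by case: (delta d) (delta d') h1 h2 => [x y] [x' y'] /= -> ->.
move=> /eqP hd.
have := allE (allE delta_inj_c d) d'.
by rewrite hd /= => /eqP ->.
Qed.

Lemma cover p : exists k d, p = padd (c k) (delta d).
Proof.
have [g gK Kg] := injF_bij Fc_inj.
by exists (g p).1, (g p).2; rewrite -[LHS](Kg p); case: (g p).
Qed.

Lemma ball_rep p i : (lee_dist p (c i) <= 1)%N -> exists e, p = padd (c i) (delta e).
Proof.
rewrite /lee_dist => Hi.
have := allE (allE ball_delta_c (p.1 - (c i).1)) (p.2 - (c i).2).
rewrite Hi implyTb => /hasE [e /eqP He]; exists e.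
rewrite /padd -He /=.
case: (c i) => [x y]; case: p {Hi He} => [u v] /=.
by rewrite [x + _]addrC [y + _]addrC !subrK.
Qed.

Lemma pal_eq k d : pal c (padd (c k) (delta d)) = k.
Proof.
rewrite /pal; case: pickP => [i Hi | H] /=.
  have [e He] := ball_rep Hi.
  have : Fc (k, d) = Fc (i, e) by rewrite /Fc /= -He.
  by move/Fc_inj => [->].
have := H k; rewrite /lee_dist /padd /=.
by rewrite (addrC (c k).1) (addrC (c k).2) !addrK (allE delta_small_c d).
Qed.

Lemma pal_ball p k : (lee_dist p (c k) <= 1)%N -> pal c p = k.
Proof. by move=> /ball_rep [e ->]; rewrite pal_eq. Qed.

End Codes.

Lemma paletteE (c : 'I_5 -> point) p : palette c p = pal c p.
Proof. by rewrite /palette ffunE. Qed.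

Lemma ortho (B : grid) (c : 'I_5 -> point) : perfect_code c ->
  (forall p d d', B (padd p (delta d)) = B (padd p (delta d')) -> d = d') ->
  Defs.orthogonal B (palette c).
Proof.
move=> hc LI; apply/injectiveP => p q /= [eB eP].
have [k [d ep]] := cover hc p; have [k' [d' eq]] := cover hc q.
move: eB eP; rewrite ep eq !paletteE !pal_eq // => eB ek; subst k'.
by rewrite (LI _ _ _ eB).
Qed.

Definition s0f (p : point) : symbol := p.2 - 2 * p.1.
Definition s1f (p : point) : symbol := s0f (p.1, rev_ord p.2).
Definition S0 : grid := [ffun p => s0f p].

Lemma S1E : reflect_grid S0 = [ffun p => s1f p].
Proof. by apply/ffunP => p; rewrite !ffunE. Qed.

Definition LIc (g : point -> symbol) := all (fun a : 'I_5 => all (fun b : 'I_5 =>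
  all (fun d : 'I_5 => all (fun d' : 'I_5 =>
  (g (padd (a, b) (delta d)) == g (padd (a, b) (delta d'))) ==> (d == d')) Zl) Zl) Zl) Zl.
Definition rowc (g : point -> symbol) :=
  all (fun i : 'I_5 => all (fun j : 'I_5 => all (fun j' : 'I_5 =>
   (g (i, j) == g (i, j')) ==> (j == j')) Zl) Zl) Zl.
Definition colc (g : point -> symbol) :=
  all (fun j : 'I_5 => all (fun i : 'I_5 => all (fun i' : 'I_5 =>
   (g (i, j) == g (i', j)) ==> (i == i')) Zl) Zl) Zl.

Lemma s0_c : [&& LIc s0f, rowc s0f & colc s0f]. Proof. by vm_compute. Qed.
Lemma s1_c : [&& LIc s1f, rowc s1f & colc s1f]. Proof. by vm_compute. Qed.

Lemma special_of (g : point -> symbol) : [&& LIc g, rowc g & colc g] ->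
  special [ffun p => g p].
Proof.
move=> /and3P [hl hr hcl]; apply/forallP => c; apply/implyP => pc.
apply/andP; split.
  apply/andP; split; apply/forallP => i; apply/injectiveP => j j'; rewrite !ffunE => e.
    by apply/eqP; have := allE (allE (allE hr i) j) j'; rewrite e eqxx.
  by apply/eqP; have := allE (allE (allE hcl i) j) j'; rewrite e eqxx.
apply: ortho => // -[a b] d d'; rewrite !ffunE => e.
by apply/eqP; have := allE (allE (allE (allE hl a) b) d) d'; rewrite e eqxx.
Qed.

Lemma special_relabel (s : {perm symbol}) A : special A -> special (relabel s A).
Proof.
move=> /forallP sp; apply/forallP => c; apply/implyP => pc.
have /andP [/andP [/forallP hr /forallP hcl] ho] := implyP (sp c) pc.
apply/andP; split.
  apply/andP; split; apply/forallP => i; apply/injectiveP => j j'; rewrite !ffunE.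
    by move/perm_inj; apply: (injectiveP _ (hr i)).
  by move/perm_inj; apply: (injectiveP _ (hcl i)).
apply/injectiveP => p q; rewrite /= !ffunE => -[/perm_inj e1 e2].
apply: (injectiveP _ ho) => /=; rewrite e1; by congr pair; rewrite !ffunE.
Qed.

Lemma special_S0 : special S0. Proof. exact: special_of s0_c. Qed.
Lemma special_S1 : special (reflect_grid S0). Proof. rewrite S1E; exact: special_of s1_c. Qed.

Definition ball (c : 'I_5 -> point) p k := (lee_dist p (c k) <= 1)%N.
Definition goodc (f : 'I_5 -> 'I_5) (c : 'I_5 -> point) :=
  all (fun i : 'I_5 => all (fun i' : 'I_5 => all (fun k : 'I_5 =>
    (ball c (i, f i) k && ball c (i', f i') k) ==> (i == i')) Zl) Zl) Zl.
Definition good (f : 'I_5 -> 'I_5) :=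
  if all (fun i : 'I_5 => all (fun i' : 'I_5 => (f i == f i') ==> (i == i')) Zl) Zl
  then (if goodc f c1f then goodc f c2f else false) else false.
Definition slope (m : 'I_5) (f : 'I_5 -> 'I_5) := all (fun i => f i == f 0 + m * i) Zl.
Definition fof (a b c d e : 'I_5) : 'I_5 -> 'I_5 := fun i => nth a [:: a; b; c; d; e] i.

Lemma good_slope_c : all (fun a => all (fun b => all (fun c => all (fun d => all (fun e =>
   good (fof a b c d e) ==> (slope 2 (fof a b c d e) || slope 3 (fof a b c d e))) Zl)
   Zl) Zl) Zl) Zl.
Proof. by vm_compute. Qed.

Lemma fofE (f : 'I_5 -> 'I_5) i : f i = fof (f 0) (f 1) (f 2) (f 3) (f 4) i.
Proof. by case: i => [[|[|[|[|[|n]]]]] Hx] //=; congr f; apply: val_inj. Qed.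

Lemma good_slope f : good f -> slope 2 f || slope 3 f.
Proof.
have -> : f = fof (f 0) (f 1) (f 2) (f 3) (f 4).
  by apply: functional_extensionality => i; exact: fofE.
apply/implyP.
exact: (allE (allE (allE (allE (allE good_slope_c _) _) _) _) _).
Qed.

Lemma pc_c1 : all (fun i => all (fun j => (i != j) ==> (3 <= lee_dist (c1f i) (c1f j))%N) Zl) Zl.
Proof. by vm_compute. Qed.
Lemma pc_c2 : all (fun i => all (fun j => (i != j) ==> (3 <= lee_dist (c2f i) (c2f j))%N) Zl) Zl.
Proof. by vm_compute. Qed.

Lemma pcf (cf : 'I_5 -> point) :
  all (fun i => all (fun j => (i != j) ==> (3 <= lee_dist (cf i) (cf j))%N) Zl) Zl ->
  lee_dist (cf 0) (cf 1) = 3%N ->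
  perfect_code (finfun cf).
Proof.
move=> H1 H2; apply/andP; split.
  apply/forallP => i; apply/forallP => j; rewrite !ffunE.
  exact: (allE (allE H1 i) j).
apply/existsP; exists 0; apply/existsP; exists 1; rewrite !ffunE H2 eqxx.
by [].
Qed.

Lemma pc1 : perfect_code (finfun c1f). Proof. apply: pcf pc_c1 _; by vm_compute. Qed.
Lemma pc2 : perfect_code (finfun c2f). Proof. apply: pcf pc_c2 _; by vm_compute. Qed.

Lemma inter_c : all (fun a : 'I_5 => all (fun b : 'I_5 =>
  has (fun i => a + 2 * i == b + 3 * i) Zl) Zl) Zl.
Proof. by vm_compute. Qed.

Lemma rev_c : all (fun i : 'I_5 => all (fun j : 'I_5 =>
  j - 3 * i == 4 - s1f (i, j)) Zl) Zl.
Proof. by vm_compute. Qed.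

Lemma classify A : special A ->
  exists sigma : {perm symbol},
    A = relabel sigma S0 \/ A = relabel sigma (reflect_grid S0).
Proof.
move=> spA.
have sp (c : {ffun 'I_5 -> point}) : perfect_code c -> perfect_sudoku c A.
  by move=> pc; exact: (implyP (forallP spA c) pc).
have /andP [/andP [/forallP hr /forallP hcl] ho1] := sp _ pc1.
have /andP [_ ho2] := sp _ pc2.
have rowi i : injective (fun j => A (i, j)) := injectiveP _ (hr i).
have coli j : injective (fun i => A (i, j)) := injectiveP _ (hcl j).
pose fs (s : symbol) (i : 'I_5) : 'I_5 := odflt 0 [pick j | A (i, j) == s].
have fsP s i : A (i, fs s i) = s.
  have [g _ Kg] := injF_bij (rowi i).
  rewrite /fs; case: pickP => [j /eqP // | H].
  by have := H (g s); rewrite /= Kg eqxx.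
have fsU s i j : A (i, j) = s -> fs s i = j.
  by move=> e; apply: (rowi i); rewrite /= fsP e.
have gc (cf : 'I_5 -> point) s : perfect_code (finfun cf) ->
    Defs.orthogonal A (palette (finfun cf)) -> goodc (fs s) cf.
  move=> pc ho; apply/allP => i _; apply/allP => i' _; apply/allP => k _.
  apply/implyP => /andP [b1 b2].
  have q1 : pal (finfun cf) (i, fs s i) = k.
    by apply: (pal_ball pc); rewrite ffunE.
  have q2 : pal (finfun cf) (i', fs s i') = k.
    by apply: (pal_ball pc); rewrite ffunE.
  have := injectiveP _ ho (i, fs s i) (i', fs s i').
  by rewrite /= !paletteE q1 q2 !fsP => /(_ erefl) [->].
have hgood s : good (fs s).
  have hinj : all (fun i : 'I_5 => all (fun i' : 'I_5 =>
      (fs s i == fs s i') ==> (i == i')) Zl) Zl.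
    apply/allP => i _; apply/allP => i' _; apply/implyP => /eqP e; apply/eqP.
    by apply: (coli (fs s i)); rewrite /= fsP e fsP.
  by rewrite /good hinj (gc _ s pc1 ho1) (gc _ s pc2 ho2).
have hsl s := good_slope (hgood s).
have slopeE m f : slope m f -> forall i, f i = f 0 + m * i.
  by move=> H i; apply/eqP; exact: (allE H i).
have key m : (forall s, slope m (fs s)) -> forall i j, A (i, j) = A (0, j - m * i).
  move=> H i j.
  have e := fsU (A (i, j)) i j erefl.
  have := slopeE _ _ (H (A (i, j))) i; rewrite e => ej.
  have -> : j - m * i = fs (A (i, j)) 0 by rewrite {1}ej addrK.
  by rewrite fsP.
case: (boolP (all (fun s => slope 2 (fs s)) Zl)) => [H2 | N2].
  have K := key 2 (allE H2).
  exists (perm (rowi 0)); left.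
  by apply/ffunP => -[i j]; rewrite !ffunE permE /s0f /= K.
move: N2; rewrite -has_predC => /hasE [s0 /= ns0].
have s03 : slope 3 (fs s0) by move: (hsl s0); rewrite (negbTE ns0).
have H3 t : slope 3 (fs t).
  case/orP: (hsl t) => // h2; exfalso.
  have [i /eqP hi] := hasE (allE (allE inter_c (fs t 0)) (fs s0 0)).
  have ets : t = s0.
    by rewrite -(fsP t i) -(fsP s0 i) (slopeE _ _ h2 i) (slopeE _ _ s03 i) hi.
  by rewrite -ets h2 in ns0.
have K := key 3 H3.
have inj4 : injective (fun x : symbol => A (0, 4 - x)).
  by move=> x y /(rowi 0) /addrI /oppr_inj.
exists (perm inj4); right; rewrite S1E.
apply/ffunP => -[i j]; rewrite !ffunE permE K /=.
by rewrite (eqP (allE (allE rev_c i) j)).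
Qed.

Definition Fg (x : {perm symbol} * bool) : grid :=
  relabel x.1 (if x.2 then reflect_grid S0 else S0).

Lemma surj_c0 : all (fun x : 'I_5 => has (fun j => s0f (0, j) == x) Zl) Zl.
Proof. by vm_compute. Qed.
Lemma surj_c1 : all (fun x : 'I_5 => has (fun j => s1f (0, j) == x) Zl) Zl.
Proof. by vm_compute. Qed.
Lemma sep_c : (s0f (0, 0) == s0f (1, 2)) && (s1f (0, 0) != s1f (1, 2)).
Proof. by vm_compute. Qed.

Lemma Fg_inj : injective Fg.
Proof.
move=> [s b] [t b'] e.
have ev p : s ((if b then [ffun p => s1f p] else S0) p)
          = t ((if b' then [ffun p => s1f p] else S0) p).
  by have := congr1 (fun G : grid => G p) e; rewrite /Fg /= !ffunE S1E.
have /andP [/eqP h0 h1] := sep_c.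
have hb : b = b'.
  clear e; case: b b' ev => [] [] // ev;
  have e0 := ev (0, 0); have e1 := ev (1, 2); rewrite !ffunE in e0 e1;
  first [ by move: e0; rewrite h0 -e1 => /perm_inj/eqP; rewrite (negbTE h1)
        | by move: e0; rewrite h0 e1 => /perm_inj/eqP; rewrite eq_sym (negbTE h1) ].
subst b'; congr pair; apply/permP => x; clear e.
case: b ev => ev.
  have [j /eqP hj] := hasE (allE surj_c1 x).
  by have := ev (0, j); rewrite !ffunE hj.
have [j /eqP hj] := hasE (allE surj_c0 x).
by have := ev (0, j); rewrite !ffunE hj.
Qed.

Theorem mainTheorem7 :
  #|[set A : grid | special A]| = 240 /\
  exists S0 : grid, special S0 /\
    forall A : grid, special A ->
      exists sigma : {perm symbol},
        A = relabel sigma S0 \/ A = relabel sigma (reflect_grid S0).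
Proof.
split; last first.
  by exists S0; split; [exact: special_S0 | exact: classify].
have -> : [set A : grid | special A] = Fg @: setT.
  apply/setP => A; rewrite inE; apply/idP/imsetP.
    move/classify => [s [-> | ->]].
      by exists (s, false); rewrite ?inE.
    by exists (s, true); rewrite ?inE.
  move=> [[s b] _ ->]; rewrite /Fg /=; apply: special_relabel.
  by case: b; [exact: special_S1 | exact: special_S0].
rewrite card_imset; last exact: Fg_inj.
by rewrite cardsT card_prod card_Sn card_bool.
Qed.
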